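(* Let $G$ be a finite simple graph with $n$ vertices and minimum degree $\delta$ satisfying $1{,}000 \le \delta \le 24{,}000$. Then $$\gamma_s(G) \le \frac{\sqrt{\ln(\delta+1)\,(11.8 - 0.48\ln\delta)} + 0.25}{\sqrt{\delta+1}}\, n.$$
   Context: For a vertex $v$ of $G$, $N[v]$ denotes the closed neighbourhood of $v$ (i.e. $v$ together with its neighbours). A signed domination function of $G$ is a function $f: V(G) \to \{-1, 1\}$ such that $\sum_{x \in N[v]} f(x) \ge 1$ for every vertex $v \in V(G)$. The weight of $f$ is $f(V(G)) = \sum_{v \in V(G)} f(v)$. The signed domination number $\gamma_s(G)$ is the minimum weight of a signed domination function of $G$. *)

(* Defs.v *)
From mathcomp Require Import all_boot all_order all_algebra.
Set Implicit Arguments. Unset Strict Implicit. Unset Printing Implicit Defensive.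
Import Order.TTheory GRing.Theory Num.Theory.

Definition simple_graph (V : finType) (e : rel V) : Prop :=
  symmetric e /\ irreflexive e.

Definition deg (V : finType) (e : rel V) (v : V) : nat := #|[set u | e v u]|.

Definition is_min_degree (V : finType) (e : rel V) (d : nat) : Prop :=
  (forall v, d <= deg e v) /\ exists v, deg e v = d.

Definition closed_nbhd (V : finType) (e : rel V) (v : V) : {set V} :=
  v |: [set u | e v u].

Definition signed_dom_fun (V : finType) (e : rel V) (f : V -> int) : Prop :=
  (forall v, f v = 1%R \/ f v = (-1)%R) /\
  (forall v, (1 <= \sum_(x in closed_nbhd e v) f x)%R).

Definition weight (V : finType) (f : V -> int) : int := (\sum_(x : V) f x)%R.

Definition signed_domination_number (V : finType) (e : rel V) (g : int) : Prop :=
  (exists f, signed_dom_fun e f /\ weight f = g) /\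
  (forall f, signed_dom_fun e f -> (g <= weight f)%R).

(* Main.v *)
Require Import Defs.
From mathcomp Require Import all_boot all_order all_algebra.
From mathcomp Require Import all_classical all_reals all_analysis.
From mathcomp Require Import ring lra zify.
Import Order.TTheory GRing.Theory Num.Theory.
Local Open Scope ring_scope.
Section Prob.
Variables (R : realType) (V : finType) (q : R).

Definition wt (f : {ffun V -> bool}) : R := \prod_x (if f x then q else 1 - q).

Lemma E_pow (A : {set V}) (z : R) :
  \sum_f wt f * \prod_(y in A) (if f y then z else 1) = (q * z + (1 - q)) ^+ #|A|.
Proof.
rewrite /wt.
under eq_bigr => f _ do rewrite [X in _ * X]big_mkcond -big_split /=.
rewrite -(bigA_distr_bigA (fun y (b : bool) => (if b then q else 1 - q) *
   (if y \in A then (if b then z else 1) else 1))) /=.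
rewrite -prodr_const [RHS]big_mkcond /=; apply: eq_bigr => y _.
rewrite big_bool /=; case: (y \in A); rewrite ?mulr1 //; ring.
Qed.

Lemma wt_ge0 (f : {ffun V -> bool}) : 0 <= q <= 1 -> 0 <= wt f.
Proof.
move=> /andP[q0 q1]; apply: prodr_ge0 => x _; case: (f x) => //; by rewrite subr_ge0.
Qed.

Lemma wt_sum1 : \sum_f wt f = 1.
Proof.
have := E_pow finset.set0 0; rewrite cards0 expr0 => <-.
by apply: eq_bigr => f _; rewrite big_set0 mulr1.
Qed.

Lemma average (X : {ffun V -> bool} -> R) : 0 <= q <= 1 ->
  exists f, X f <= \sum_f wt f * X f.
Proof.
move=> hq.
have [f _ hmin] := arg_minP X (i0 := [ffun => true]) (P := predT) isT.
exists f.
have -> : X f = \sum_g wt g * X f by rewrite -mulr_suml wt_sum1 mul1r.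
apply: ler_sum => g _; apply: ler_wpM2l; first exact: wt_ge0.
exact: hmin.
Qed.
End Prob.
Arguments wt {R V} q f.
Arguments E_pow {R V} q A z.
Arguments wt_sum1 {R V} q.
Arguments wt_ge0 {R V q} f.
Arguments average {R V q} X.

Section Det.
Variables (V : finType) (e : rel V) (f : {ffun V -> bool}).

Definition N v := closed_nbhd e v.
Definition kk v := #|[set y in N v | f y]|.
Definition bad v := (#|N v| <= 2 * kk v)%N.
Definition inM x := f x && [forall v, (x \in N v) ==> ~~ bad v].
Definition gfun x : int := if inM x then -1 else 1.

Lemma prod_cnt (R : realType) (A : {set V}) (z : R) :
  \prod_(y in A) (if f y then z else 1) = z ^+ #|[set y in A | f y]|.
Proof.
rewrite -big_mkcondr prodr_const; congr (_ ^+ _); apply: eq_card => y.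
by rewrite inE.
Qed.

Lemma sum_cnt (R : numDomainType) (A : {set V}) (P : pred V) :
  \sum_(y in A) (if P y then 1 else 0) = #|[set y in A | P y]|%:R :> R.
Proof.
rewrite -big_mkcondr sumr_const; congr (_ *+ _); apply: eq_card => y.
by rewrite inE.
Qed.

Lemma gfun_dom : signed_dom_fun e gfun.
Proof.
split.
  by move=> v; rewrite /gfun; case: (inM v); [right|left].
move=> v.
have vN : v \in N v by rewrite /N /closed_nbhd setU11.
case bv: (bad v).
  have -> : \sum_(x in closed_nbhd e v) gfun x = \sum_(x in N v) 1.
    apply: eq_bigr => x xN; rewrite /gfun /inM.
    case: (f x) => //=.
    have -> : [forall v0, (x \in N v0) ==> ~~ bad v0] = false.
      apply/negbTE/negP => /forallP /(_ v); by rewrite xN bv.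
    by [].
  rewrite sumr_const.
  have : (0 < #|N v|)%N by apply/card_gt0P; exists v.
  case: #|N v| => // n _; lia.
apply: (@le_trans _ _ (\sum_(x in N v) (1 - 2 * (if f x then 1 else 0)))).
  rewrite sumrB sumr_const -mulr_sumr.
  have := sum_cnt int (N v) f; rewrite -/(kk v) => ->.
  move: bv; rewrite /bad => /negbT; rewrite -ltnNge.
  lia.
apply: ler_sum => x _; rewrite /gfun /inM.
by case: (f x) => //=; case: [forall _, _].
Qed.

Lemma weight_le (R : realType) :
  ((weight gfun)%:~R : R) <= \sum_x (2 * (if f x then 0 else 1) - 1) +
     2 * \sum_v \sum_x (if bad v && (x \in N v) then 1 else 0).
Proof.
rewrite /weight (rmorph_sum (intr : {rmorphism int -> R})) /=.
rewrite (exchange_big _ _ _ _ _ (fun v x => if bad v && (x \in N v) then (1:R) else 0)).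
rewrite mulr_sumr -big_split /=; apply: ler_sum => x _.
have s0 : 0 <= \sum_v (if bad v && (x \in N v) then 1 else 0 : R).
  by apply: sumr_ge0 => v _; case: ifP.
rewrite /gfun /inM; case fx: (f x) => /=.
  case h: [forall v, (x \in N v) ==> ~~ bad v] => /=.
    rewrite mulr0 sub0r; lra.
  move: h => /negbT /forallPn [v]; rewrite negb_imply negbK => /andP[xN bv].
  rewrite (bigD1 v) //= bv xN /=.
  have : 0 <= \sum_(i | i != v) (if bad i && (x \in N i) then 1 else 0 : R).
    by apply: sumr_ge0 => i _; case: ifP.
  lra.
lra.
Qed.

Lemma bad_le (R : realType) (s : R) v : 1 <= s ->
  \sum_x (if bad v && (x \in N v) then 1 else 0 : R) <=
  #|N v|%:R * \prod_(y in N v) (if f y then s ^+ 2 else 1) / s ^+ #|N v|.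
Proof.
move=> s1; have s0 : 0 < s by lra.
have sD0 : 0 < s ^+ #|N v| by apply: exprn_gt0.
rewrite prod_cnt -/(kk v); case bv: (bad v) => /=.
  rewrite -big_mkcond /= sumr_const.
  rewrite -mulrA ler_peMr // ?ler_pdivlMr // ?mul1r -?exprM.
  by apply: ler_weXn2l => //; move: bv; rewrite /bad mulnC.
rewrite big1 // divr_ge0 ?mulr_ge0 ?exprn_ge0 //; lra.
Qed.
End Det.
Arguments N {V} e v.
Arguments kk {V} e f v.
Arguments bad {V} e f v.
Arguments inM {V} e f x.
Arguments gfun {V} e f x.
Arguments weight_le {V} e f R.
Arguments bad_le {V} e f R s v.
Arguments gfun_dom {V} e f.

Section Numeric.
Variable R : realType.

Lemma powle n [a b c : R] : a <= b -> 0 <= a -> c <= a ^+ n -> c <= b ^+ n.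
Proof.
move=> ab a0 ca; apply: (le_trans ca); apply: lerXn2r => //; rewrite nnegrE //; lra.
Qed.

Lemma e1_ge : (61 / 25 : R) <= expR 1.
Proof.
have h : (5 / 4 : R) <= expR (1 / 4) by have := expR_ge1Dx (1/4 : R); lra.
have -> : expR (1 : R) = expR (1 / 4) ^+ 4.
  by rewrite -expRM_natr; congr expR; field.
apply: (powle 4%N h); [lra|rewrite !exprS expr0; lra].
Qed.

Lemma eN_ge : (3 / 4 : R) <= expR (- (1 / 4)).
Proof. by have := expR_ge1Dx (- (1/4) : R); lra. Qed.

Lemma e12 : (210 * 210 : R) <= expR 12 /\ (210 * (29/2) : R) <= expR 9.
Proof.
have e0 := e1_ge.
have h3 : (29/2 : R) <= expR 1 ^+ 3.
  apply: (powle 3%N e0); [lra|rewrite !exprS expr0; lra].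
have h6 : (210 : R) <= expR 1 ^+ 6.
  rewrite (_ : 6 = 3 * 2)%N // exprM.
  apply: (powle 2%N h3); [lra|rewrite !exprS expr0; lra].
have h12 : (210 * 210 : R) <= expR 1 ^+ 12.
  rewrite (_ : 12 = 6 * 2)%N // exprM.
  apply: (powle 2%N h6); [lra|rewrite !exprS expr0; lra].
have E n : expR (n%:R : R) = expR 1 ^+ n by rewrite -expRM_natl mulr1.
split; first by rewrite (E 12%N).
rewrite (E 9%N) (_ : 9 = 6 + 3)%N // exprD.
have p3 := exprn_ge0 3 (ltW (expR_gt0 (1:R))).
nra.
Qed.

Lemma exp5 : expR (5 : R) <= 1000.
Proof.
have h := eN_ge.
have e : expR (-5 : R) = (expR (- (1/4)) ^+ 4) ^+ 5.
  by rewrite -exprM -expRM_natr; congr expR; lra.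
have h4 : (3/10 : R) <= expR (- (1/4)) ^+ 4.
  apply: (powle 4%N h); [lra|rewrite !exprS expr0; lra].
have h20 : (1/1000 : R) <= expR (-5).
  rewrite e.
  apply: (powle 5%N h4); [lra|rewrite !exprS expr0; lra].
have := expRxMexpNx_1 (5 : R).
have := expR_gt0 (5 : R).
nra.
Qed.
End Numeric.

Section Expect.
Variables (R : realType) (V : finType) (e : rel V) (q s : R).

Definition Xf (f : {ffun V -> bool}) : R :=
  \sum_x (2 * (if f x then 0 else 1) - 1) +
  2 * \sum_v (#|N e v|%:R * \prod_(y in N e v) (if f y then s ^+ 2 else 1) / s ^+ #|N e v|).

Lemma expect :
  \sum_f wt q f * Xf f = #|V|%:R * (2 * (1 - q) - 1) +
    2 * \sum_v (#|N e v|%:R * (q * s ^+ 2 + (1 - q)) ^+ #|N e v| / s ^+ #|N e v|).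
Proof.
rewrite /Xf.
transitivity (\sum_(f : {ffun V -> bool}) wt q f * \sum_x (2 * (if f x then 0 else 1) - 1) +
   2 * \sum_(f : {ffun V -> bool}) wt q f * \sum_v (#|N e v|%:R * \prod_(y in N e v) (if f y then s ^+ 2 else 1) / s ^+ #|N e v|)).
  rewrite mulr_sumr -big_split; apply: eq_bigr => f _ /=; ring.
under eq_bigr => f _ do rewrite mulr_sumr.
under [in X in _ + 2 * X]eq_bigr => f _ do rewrite mulr_sumr.
rewrite exchange_big [in X in _ + 2 * X]exchange_big /=.
congr (_ + 2 * _).
  rewrite mulr_natl -sumr_const.
  apply: eq_bigr => x _.
  have L1 : \sum_f wt q f * (if f x then 0 else 1) = 1 - q.
    have := E_pow q [set x] 0; rewrite cards1 expr1 mulr0 add0r => <-.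
    by apply: eq_bigr => f _; rewrite big_set1.
  transitivity (2 * \sum_(f : {ffun V -> bool}) wt q f * (if f x then 0 else 1) - \sum_(f : {ffun V -> bool}) wt q f).
    rewrite mulr_sumr -sumrB; apply: eq_bigr => f _. by rewrite mulrBr mulr1 mulrCA.
  by rewrite wt_sum1 -L1.
apply: eq_bigr => v _.
rewrite -E_pow mulr_sumr mulr_suml; apply: eq_bigr => f _; ring.
Qed.
End Expect.
Arguments Xf {R V} e s f.
Arguments expect {R V} e q s.



Section Aux.
Context {R : realType}.

Lemma L_c [c D0 : R] : 0 <= c -> c ^+ 2 = D0 -> 1001 <= D0 -> D0 <= 24 * 1000 + 1 ->
  31 <= c /\ c <= 155.
Proof. move=> *; split; nra. Qed.

Lemma L_x0 [x0 c : R] : x0 * c = 13 / 2 -> 31 <= c -> 0 <= x0 /\ x0 <= 1 / 4.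
Proof. move=> *; split; nra. Qed.

Lemma L_a [x0 : R] : 0 <= x0 -> x0 <= 1 / 4 -> x0 ^+ 2 / 2 <= 1.
Proof. move=> *; rewrite expr2; nra. Qed.

Lemma L_tail [a D0 Dv Ex Ev Em : R] : 0 <= a -> a * D0 = 169 / 8 -> D0 <= Dv ->
  0 < Ev -> 1 + a * (Dv - D0) <= Ex -> Em = Ex * Ev -> 1001 <= D0 ->
  Dv * Ev <= D0 * Em.
Proof.
move=> a0 aD Dv0 Ev0 hx -> D1.
have h1 : Dv <= D0 * (1 + a * (Dv - D0)) by nra.
have h2 : D0 * (1 + a * (Dv - D0)) <= D0 * Ex by apply: ler_wpM2l; lra.
have : Dv <= D0 * Ex by lra.
nra.
Qed.

Lemma L_B1 [g w X n x0 S D0 Em : R] : g <= w -> w <= X -> X <= n * x0 + 2 * S ->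
  S <= n * (D0 * Em) -> g <= n * (x0 + 2 * D0 * Em).
Proof. move=> *; nra. Qed.

Lemma L_Eb [D0 c E12 E9 E18 : R] : D0 <= 24 * 1000 + 1 -> c <= 155 -> 0 <= c ->
  0 <= D0 -> 210 * 210 <= E12 -> 210 * (29 / 2) <= E9 -> 1 <= E18 ->
  D0 * (4 * c) <= E12 * E9 * E18.
Proof.
move=> *.
have p1 : D0 * (4 * c) <= E12 * E9 by apply: ler_pM; lra.
have : 0 <= E12 * E9 by apply: mulr_ge0; lra.
nra.
Qed.

Lemma L_K1 [c D0 x0 Em Eb : R] : 0 < c -> x0 * c = 13 / 2 -> D0 * (4 * c) <= Eb ->
  Em * Eb = 1 -> 0 < Em -> 0 <= D0 -> x0 + 2 * D0 * Em <= 7 / c.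
Proof.
move=> c0 xc Db EE Em0 D0p.
rewrite ler_pdivlMr //.
have : D0 * (4 * c) * Em <= Eb * Em by apply: ler_wpM2r; lra.
nra.
Qed.

Lemma L_P [L ld : R] : 5 <= L -> L <= 15 -> ld <= L ->
  (27 / 4) ^+ 2 <= L * (118 / 10 - 48 / 100 * ld).
Proof.
move=> *.
have : 0 <= (L - 5) * (15 - L) by apply: mulr_ge0; lra.
have : 0 <= L * (L - ld) by apply: mulr_ge0; lra.
rewrite !exprS expr0; nra.
Qed.
End Aux.

Theorem corollary2 (R : realType) (V : finType) (e : rel V) (delta : nat) (gs : int) :
  simple_graph e ->
  is_min_degree e delta ->
  (1000 <= delta <= 24000)%N ->
  signed_domination_number e gs ->
  (gs%:~R : R) <=
    (Num.sqrt (ln (delta.+1%:R : R) * (118 / 10 - 48 / 100 * ln (delta%:R : R))) + 1 / 4)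
      / Num.sqrt (delta.+1%:R : R) * (#|V|%:R : R).
Proof.
move=> [esym eirr] [mindeg _] /andP[d1 d2] [_ gsmin].
pose D0 : R := delta.+1%:R.
have D0lo : 1001 <= D0 by rewrite /D0 ler_nat.
have D0hi : D0 <= 24 * 1000 + 1.
  have : (delta.+1 <= 24 * 1000 + 1)%N by apply: leq_ltn_trans d2 _.
  by rewrite -(ler_nat R) natrD natrM.
pose c := Num.sqrt D0.
have c0 : 0 <= c := sqrtr_ge0 _.
have c2 : c ^+ 2 = D0 by apply: sqr_sqrtr; lra.
have [clo chi] := L_c c0 c2 D0lo D0hi.
pose x0 := 13 / (2 * c).
have x0c : x0 * c = 13 / 2 by rewrite /x0; field; lra.
have [x0lo x0hi] := L_x0 x0c clo.
pose q := (1 - x0) / 2.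
pose s := 1 + x0.
have hq : 0 <= q <= 1 by apply/andP; split; rewrite /q; lra.
have s1 : 1 <= s by rewrite /s; lra.
pose a := x0 ^+ 2 / 2.
have aD0 : a * D0 = 169 / 8.
  rewrite /a -c2 /x0; field; lra.
have a0 : 0 <= a by rewrite /a; apply: divr_ge0 => //; apply: sqr_ge0.
have a1 : a <= 1 by apply: L_a.
pose Em := expR (- (169 / 8) : R).
have Em0 : 0 < Em := expR_gt0 _.
have hv : forall v, #|N e v|%:R * (q * s ^+ 2 + (1 - q)) ^+ #|N e v| / s ^+ #|N e v|
            <= D0 * Em.
  move=> v.
  have Dge : (delta.+1 <= #|N e v|)%N.
    rewrite /N /closed_nbhd cardsU1 inE eirr /=.
    by have := mindeg v; rewrite /deg.
  have Dvge : D0 <= #|N e v|%:R by rewrite /D0 ler_nat.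
  set Dv := #|N e v|%:R.
  have -> : q * s ^+ 2 + (1 - q) = (1 - a) * s by rewrite /q /s /a; field.
  have sn0 : s ^+ #|N e v| != 0 by apply: expf_neq0; lra.
  rewrite exprMn mulrA mulfK //.
  have r1 : (1 - a) ^+ #|N e v| <= expR (- a * Dv).
    rewrite expRM_natr; apply: lerXn2r; rewrite ?nnegrE; try lra.
      by apply: ltW; apply: expR_gt0.
    by have := expR_ge1Dx (- a); lra.
  have Ev0 : 0 < expR (- a * Dv) := expR_gt0 _.
  have eq1 : Em = expR (a * (Dv - D0)) * expR (- a * Dv).
    by rewrite -expRD /Em; congr expR; rewrite -aD0; ring.
  have g1 := expR_ge1Dx (a * (Dv - D0)).
  have Dv0 : 0 <= Dv by lra.
  apply: (le_trans (ler_wpM2l Dv0 r1)).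
  exact: (L_tail a0 aD0 Dvge Ev0 g1 eq1 D0lo).
have [f hf] := average (Xf e s) hq.
rewrite (expect e q s) in hf.
have W : ((weight (gfun e f))%:~R : R) <= Xf e s f.
  rewrite /Xf; apply: (le_trans (weight_le e f R)); apply: lerD => //.
  apply: ler_wpM2l => //; apply: ler_sum => v _; exact: bad_le.
have G : (gs%:~R : R) <= (weight (gfun e f))%:~R.
  by rewrite ler_int; apply: gsmin; apply: gfun_dom.
set n := #|V|%:R.
have n0 : 0 <= n by rewrite /n ler0n.
have E1 : \sum_v #|N e v|%:R * (q * s ^+ 2 + (1 - q)) ^+ #|N e v| / s ^+ #|N e v|
            <= n * (D0 * Em).
  rewrite /n mulr_natl -sumr_const; apply: ler_sum => v _; exact: hv.
have hx : 2 * (1 - q) - 1 = x0 by rewrite /q; field.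
rewrite hx in hf.
have B1 := L_B1 G W hf E1.
have [e12a e9] := e12 R.
have Eb : D0 * (4 * c) <= expR (169 / 8).
  have -> : expR (169 / 8 : R) = expR 12 * expR 9 * expR (1 / 8).
    by rewrite -!expRD; congr expR; lra.
  have h18 : 1 <= expR (1 / 8 : R) by have := expR_ge1Dx (1 / 8 : R); lra.
  apply: L_Eb => //; lra.
have EmE : Em * expR (169 / 8) = 1 by rewrite /Em mulrC expRxMexpNx_1.
have c0' : 0 < c by lra.
have K1 : x0 + 2 * D0 * Em <= 7 / c.
  apply: (L_K1 c0' x0c Eb EmE Em0); lra.
set L := ln D0.
have L5 : 5 <= L.
  rewrite /L -(expRK 5) ler_ln ?posrE ?expR_gt0 //; have := exp5 R; lra.
have L15 : L <= 15.
  rewrite /L -(expRK 15) ler_ln ?posrE ?expR_gt0 //.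
  have : expR (12 : R) <= expR 15 by rewrite ler_expR; lra.
  lra.
have ldL : ln (delta%:R : R) <= L.
  have dp : (0 < delta)%N by apply: leq_trans d1.
  by rewrite /L ler_ln ?posrE /D0 ?ler_nat ?ltr0n ?dp ?leqnSn.
set P := L * _.
have P1 : (27 / 4) ^+ 2 <= P by apply: L_P.
have SP : 27 / 4 <= Num.sqrt P.
  have : Num.sqrt ((27 / 4) ^+ 2) <= Num.sqrt P.
    by rewrite ler_sqrt //; apply: le_trans P1; apply: sqr_ge0.
  by rewrite sqrtr_sqr ger0_norm //; lra.
apply: (le_trans B1).
rewrite mulrC; apply: ler_wpM2r => //.
apply: (le_trans K1).
apply: ler_wpM2r; first by rewrite invr_ge0.
lra.
Qed.
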